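(* Let $m_1,m_2$ be positive real numbers with $m_1\leq 1.8m_2$. Then the complete graph $K_t$ belongs to $\mathcal{G}_{m_1,m_2}$ for every integer $1\leq t\leq \lfloor 2m_1\rfloor$.
   Context: All graphs are finite and simple. For a graph $H$, $|H|$ denotes its number of vertices and $\lVert H\rVert$ its number of edges. For real numbers $m_1,m_2$, $\mathcal{G}_{m_1,m_2}$ is the class of graphs $G$ such that $\lVert H\rVert\leq m_1|H|$ for every subgraph $H$ of $G$, and $\lVert H\rVert\leq m_2|H|$ for every bipartite subgraph $H$ of $G$. *)

(* Defs.v *)
From HB Require Import structures.
From mathcomp Require Import all_boot all_order all_algebra.
Set Implicit Arguments. Unset Strict Implicit. Unset Printing Implicit Defensive.
Import Order.TTheory GRing.Theory Num.Theory.
Local Open Scope ring_scope.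

Definition simple_graph (T : finType) (e : rel T) : Prop :=
  symmetric e /\ irreflexive e.

Definition edges (T : finType) (e : rel T) : {set {set T}} :=
  [set [set x; y] | x in T, y in T & e x y].

(* H = (V, E) is a subgraph of G = (T, e): E is a set of edges of G whose
   endpoints all lie in V.  |H| = #|V|, ||H|| = #|E|. *)
Definition is_subgraph (T : finType) (e : rel T)
    (V : {set T}) (E : {set {set T}}) : Prop :=
  E \subset edges e /\ (forall f, f \in E -> f \subset V).

Definition is_bipartite (T : finType) (V : {set T}) (E : {set {set T}}) : Prop :=
  exists A : {set T}, A \subset V /\ (forall f, f \in E -> #|f :&: A| = 1%N).

Definition in_class (R : realFieldType) (m1 m2 : R)
    (T : finType) (e : rel T) : Prop :=
  forall (V : {set T}) (E : {set {set T}}), is_subgraph e V E ->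
    (#|E|%:R <= m1 * #|V|%:R) /\
    (is_bipartite V E -> #|E|%:R <= m2 * #|V|%:R).

Definition complete_rel (t : nat) : rel 'I_t := fun x y => x != y.

(* Main.v *)
Require Import Defs.
From mathcomp Require Import all_boot all_order all_algebra.
From mathcomp Require Import zify ring lra.
Import Order.TTheory GRing.Theory Num.Theory.
Local Open Scope ring_scope.

Lemma half_bound t (V : {set 'I_t}) :
  (2 * #|[set p in setX V V | (p.1 < p.2)%N]| <= #|V| * #|V|)%N.
Proof.
set P := [set p in setX V V | (p.1 < p.2)%N].
set Q := [set p in setX V V | (p.2 < p.1)%N].
have h1 : #|P| = #|swap_pair @: P|.
  by rewrite card_imset //; apply: can_inj swap_pairK.
have h2 : swap_pair @: P \subset Q.
  apply/subsetP => q /imsetP [p]; rewrite !inE /= => /andP [/andP [a b] c] ->.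
  by rewrite /swap_pair /= b a c.
have h3 : P :&: Q = set0.
  apply/setP => p; rewrite !inE; apply/negP => /andP [/andP [_ a] /andP [_ b]].
  move: a b; lia.
have h4 : P :|: Q \subset setX V V.
  by apply/subsetP => p; rewrite !inE => /orP [/andP [-> _]|/andP [-> _]].
have := cardsUI P Q; rewrite h3 cards0 addn0 => h5.
have := subset_leq_card h4; rewrite cardsX h5.
have := subset_leq_card h2; rewrite -h1; lia.
Qed.

Lemma edge_cover t (V : {set 'I_t}) (E : {set {set 'I_t}}) :
  is_subgraph (@complete_rel t) V E ->
  E \subset (fun p => [set p.1; p.2]) @: [set p in setX V V | (p.1 < p.2)%N].
Proof.
move=> [sE fV]; apply/subsetP => f fE.
have := subsetP sE f fE; rewrite /edges => /imset2P [x y _].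
rewrite inE /complete_rel => /andP [_ xy] fxy.
have := fV f fE; rewrite fxy => /subsetP sV.
have xV : x \in V by apply: sV; rewrite !inE eqxx.
have yV : y \in V by apply: sV; rewrite !inE eqxx orbT.
case: (ltngtP x y) => [lt|gt|eq].
- apply/imsetP; exists (x, y); last by [].
  by rewrite !inE /= xV yV.
- apply/imsetP; exists (y, x); last by rewrite setUC.
  by rewrite !inE /= xV yV.
- by move: xy; rewrite (val_inj eq) eqxx.
Qed.

Lemma bip_cover t (V : {set 'I_t}) (E : {set {set 'I_t}}) (A : {set 'I_t}) :
  is_subgraph (@complete_rel t) V E ->
  (forall f, f \in E -> #|f :&: A| = 1%N) ->
  E \subset (fun p => [set p.1; p.2]) @: setX (V :&: A) (V :\: A).
Proof.
move=> [sE fV] hA; apply/subsetP => f fE.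
have := subsetP sE f fE; rewrite /edges => /imset2P [x y _].
rewrite inE /complete_rel => /andP [_ xy] fxy.
have := fV f fE; rewrite fxy => /subsetP sV.
have xV : x \in V by apply: sV; rewrite !inE eqxx.
have yV : y \in V by apply: sV; rewrite !inE eqxx orbT.
have := hA f fE; rewrite fxy.
case xA: (x \in A); case yA: (y \in A) => hc.
- have : [set x; y] :&: A = [set x; y].
    apply/setIidPl/subsetP => z; rewrite !inE => /orP [] /eqP ->; by rewrite ?xA ?yA.
  by move=> e; move: hc; rewrite e cards2 xy.
- apply/imsetP; exists (x, y); last by [].
  by rewrite !inE /= xV yV xA yA.
- apply/imsetP; exists (y, x); last by rewrite setUC.
  by rewrite !inE /= xV yV xA yA.
- have : [set x; y] :&: A = set0.
    apply/setP => z; rewrite !inE; apply/negP => /andP [] /orP [] /eqP ->; by rewrite ?xA ?yA.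
  by move=> e; move: hc; rewrite e cards0.
Qed.

Lemma edge_count t (V : {set 'I_t}) (E : {set {set 'I_t}}) :
  is_subgraph (@complete_rel t) V E -> (2 * #|E| <= #|V| * #|V|)%N.
Proof.
move=> hs; apply: leq_trans (@half_bound _ V); rewrite leq_mul2l /=.
exact: leq_trans (subset_leq_card (@edge_cover _ _ _ hs)) (leq_imset_card _ _).
Qed.

Lemma bip_count t (V : {set 'I_t}) (E : {set {set 'I_t}}) (A : {set 'I_t}) :
  is_subgraph (@complete_rel t) V E ->
  (forall f, f \in E -> #|f :&: A| = 1%N) -> (4 * #|E| <= #|V| * #|V|)%N.
Proof.
move=> hs hA.
have h := leq_trans (subset_leq_card (@bip_cover _ _ _ _ hs hA)) (leq_imset_card _ _).
move: h; rewrite cardsX -(cardsID A V).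
move: #|V :&: A| #|V :\: A| => a b h.
have : (4 * (a * b) <= (a + b) * (a + b))%N.
  have -> : ((a + b) * (a + b) = 4 * (a * b) + (a - b) * (a - b) + (b - a) * (b - a))%N.
    case: (leqP a b) => ab; [have -> : (a - b = 0)%N by apply/eqP; rewrite subn_eq0 |
      have -> : (b - a = 0)%N by apply/eqP; rewrite subn_eq0 ltnW]; nia.
  by rewrite -addnA leq_addr.
rewrite -(leq_pmul2l (isT : (0 < 4)%N)) in h.
move=> h2; exact: leq_trans h h2.
Qed.

Theorem lemma2 (R : archiRealFieldType) (m1 m2 : R) :
  0 < m1 -> 0 < m2 -> m1 <= (9%:R / 5%:R) * m2 ->
  forall t : nat, (1 <= t)%N -> (t%:Z <= Num.floor (2%:R * m1))%R ->
  in_class m1 m2 (@complete_rel t).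
Proof.
move=> m1p m2p m12 t t1 tf V E hs.
have tm : (t%:R : R) <= 2 * m1.
  by move: tf; rewrite floor_ge_int.
have nt : (#|V| <= t)%N by have := max_card (mem V); rewrite card_ord.
have ntR : (#|V|%:R : R) <= t%:R by rewrite ler_nat.
have n0 : (0 : R) <= #|V|%:R by [].
have e1 := @edge_count _ _ _ hs.
have e1R := e1; rewrite -(ler_nat R) !natrM in e1R.
split.
  nra.
move=> [A [AV hA]].
have e2 := @bip_count _ _ _ _ hs hA.
have e2R := e2; rewrite -(ler_nat R) !natrM in e2R.
nra.
Qed.
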